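(* Let $f=(a,b,c,d)$ be a binary cubic form over $\mathbb{F}_q[t]$ of discriminant $D$ whose Hessian $H_f=(P,Q,R)$ is imaginary or unusual, and let $U=2b^3+27a^2d-9abc$. Then $|U|^2\le|P|^3$ and $|a^2D|\le|P|^3$.
   Context: $\mathbb{F}_q$ is a finite field with $\gcd(q,6)=1$; $|H|=q^{\deg H}$ for nonzero $H\in\mathbb{F}_q[t]$, $|0|=0$. A binary cubic form $(a,b,c,d)$ is $ax^3+bx^2y+cxy^2+dy^3$ with discriminant $D=18abcd+b^2c^2-4ac^3-4b^3d-27a^2d^2$; its Hessian is $(P,Q,R)$ with $P=b^2-3ac$, $Q=bc-9ad$, $R=c^2-3bd$, a binary quadratic form of discriminant $-3D$. The Hessian is imaginary if $\deg(-3D)$ is odd, and unusual if $\deg(-3D)$ is even and its leading coefficient is a non-square in $\mathbb{F}_q^*$. One has the identity $4P^3=U^2+27a^2D$. *)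

(* Defs.v *)
From HB Require Import structures.
From mathcomp Require Import all_boot all_order all_algebra all_field.
Set Implicit Arguments. Unset Strict Implicit. Unset Printing Implicit Defensive.
Import GRing.Theory.
Local Open Scope ring_scope.

(* Absolute value on F_q[t]: |H| = q^(deg H) for H <> 0, |0| = 0.
   deg H = (size H).-1 in mathcomp. Valued in nat. *)
Definition pabs (F : finFieldType) (H : {poly F}) : nat :=
  if H == 0 then 0%N else (#|F| ^ (size H).-1)%N.

Definition cubic_disc (R : comRingType) (a b c d : R) : R :=
  18 * a * b * c * d + b ^+ 2 * c ^+ 2 - 4 * a * c ^+ 3 - 4 * b ^+ 3 * d
  - 27 * a ^+ 2 * d ^+ 2.

Definition hessP (R : comRingType) (a b c d : R) : R := b ^+ 2 - 3 * a * c.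
Definition hessQ (R : comRingType) (a b c d : R) : R := b * c - 9 * a * d.
Definition hessR (R : comRingType) (a b c d : R) : R := c ^+ 2 - 3 * b * d.

(* Here Delta = -3D for the Hessian. *)
Definition imaginary_disc (F : finFieldType) (Delta : {poly F}) : bool :=
  (Delta != 0) && odd (size Delta).-1.

Definition unusual_disc (F : finFieldType) (Delta : {poly F}) : bool :=
  [&& Delta != 0, ~~ odd (size Delta).-1 &
      ~~ [exists x : F, x ^+ 2 == lead_coef Delta]].

(* Main.v *)
Require Import Defs.
From HB Require Import structures.
From mathcomp Require Import all_boot all_order all_algebra all_field all_fingroup all_solvable.
From Stdlib Require Import Ring.
Import GRing.Theory.
Local Open Scope ring_scope.
Section Gen.
Variable T : Type.
Variables (z o : T) (ad mu : T -> T -> T) (op : T -> T).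
Hypothesis RTh : ring_theory z o ad mu (fun x y => ad x (op y)) op (@eq T).
Add Ring GR : RTh.
Fixpoint nm (n : nat) : T := if n is n'.+1 then ad o (nm n') else z.
Fixpoint pw (x : T) (n : nat) : T := if n is n'.+1 then mu x (pw x n') else o.
Let sb x y := ad x (op y).
Lemma gen_ident (a b c d : T) :
  mu (mu (op (nm 9)) (pw a 2))
     (mu (op (nm 3))
       (sb (sb (sb (ad (mu (mu (mu (mu (nm 18) a) b) c) d) (mu (pw b 2) (pw c 2)))
            (mu (mu (nm 4) a) (pw c 3))) (mu (mu (nm 4) (pw b 3)) d))
           (mu (mu (nm 27) (pw a 2)) (pw d 2))))
  = sb (mu (nm 4) (pw (sb (pw b 2) (mu (mu (nm 3) a) c)) 3))
       (pw (sb (ad (mu (nm 2) (pw b 3)) (mu (mu (nm 27) (pw a 2)) d))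
               (mu (mu (mu (nm 9) a) b) c)) 2).
Proof. rewrite /sb /=. ring. Qed.
End Gen.

Lemma RT (R : comRingType) : @ring_theory R 0 1 +%R *%R (fun x y => x - y) -%R eq.
Proof. split=> *; [exact: add0r|exact: addrC|exact: addrA|exact: mul1r|exact: mulrC|exact: mulrA|exact: mulrDl|done|exact: subrr]. Qed.

Lemma ident (R : comRingType) (a b c d : R) :
  (- 9 * a ^+ 2) * (- 3 * cubic_disc a b c d) =
  4 * hessP a b c d ^+ 3 - (2 * b ^+ 3 + 27 * a ^+ 2 * d - 9 * a * b * c) ^+ 2.
Proof. rewrite /cubic_disc /hessP !exprS !expr0 !mulrS !mulr0n.
exact (@gen_ident _ _ _ _ _ _ (RT R) a b c d). Qed.

Lemma natF_neq0 (F : finFieldType) (hq : coprime #|F| 6) (n : nat) :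
  (n = 2 \/ n = 3)%N -> (n%:R : F) != 0.
Proof.
move=> hn.
have [p pp pc] := finPcharP F.
have := abelem_pgroup (fin_ring_pchar_abelem pc).
rewrite /pgroup cardsT => /p_natP [k hk].
have pdF : (p %| #|F|)%N.
  case: k hk => [|k] hk; last by rewrite hk dvdn_exp.
  by move: (finNzRing_gt1 F); rewrite hk.
rewrite -(dvdn_pcharf pc); apply/negP => pn.
have : (p %| gcdn #|F| 6)%N.
  rewrite dvdn_gcd pdF (dvdn_trans pn) //.
  by case: hn => ->.
by rewrite (eqP hq) dvdn1 => /eqP p1; move: pp; rewrite p1.
Qed.

Lemma pabsM (F : finFieldType) (p q : {poly F}) : pabs (p * q) = (pabs p * pabs q)%N.
Proof.
rewrite /pabs mulf_eq0.
case: (eqVneq p 0) => [->|p0]; first by [].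
case: (eqVneq q 0) => [->|q0]; first by rewrite orbT muln0.
rewrite /= size_mul // -expnD; congr expn.
move: (size_poly_gt0 p) (size_poly_gt0 q); rewrite p0 q0.
by case: (size p) => // m _; case: (size q) => // n _; rewrite addSn addnS.
Qed.

Lemma pabsX (F : finFieldType) (p : {poly F}) n : pabs (p ^+ n) = (pabs p ^ n)%N.
Proof.
elim: n => [|n IH]; first by rewrite expr0 /pabs oner_eq0 size_poly1.
by rewrite exprS pabsM IH expnS.
Qed.

Lemma pabs_le (F : finFieldType) (p q : {poly F}) :
  (size p <= size q)%N -> (pabs p <= pabs q)%N.
Proof.
rewrite /pabs; case: eqVneq => [_|p0] //= h.
have q0 : q != 0 by rewrite -size_poly_gt0 (leq_trans _ h) // size_poly_gt0.
rewrite (negPf q0) leq_exp2l ?finNzRing_gt1 //.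
by rewrite -!subn1 leq_sub2r.
Qed.

Theorem mainTheorem9 (F : finFieldType) (hq : coprime #|F| 6)
    (a b c d : {poly F}) :
    let D := cubic_disc a b c d in
    let P := hessP a b c d in
    let U := 2 * b ^+ 3 + 27 * a ^+ 2 * d - 9 * a * b * c in
    imaginary_disc (- 3 * D) || unusual_disc (- 3 * D) ->
    (pabs U ^ 2 <= pabs P ^ 3)%N /\ (pabs (a ^+ 2 * D) <= pabs P ^ 3)%N.
Proof.
move=> D P U H.
have hid : (- 9 * a ^+ 2) * (- 3 * D) = 4 * P ^+ 3 - U ^+ 2 := ident _ a b c d.
have c2 : (2%:R : F) != 0 by apply: (@natF_neq0 F hq); left.
have c3 : (3%:R : F) != 0 by apply: (@natF_neq0 F hq); right.
have c9 : (9%:R : F) != 0 by rewrite (natrM F 3 3) mulf_neq0.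
have e9 : (- 9 : {poly F}) * a ^+ 2 = (- 9%:R : F) *: a ^+ 2.
  by rewrite -polyC_natr -polyCN mul_polyC.
have s4 : (size (4 * P ^+ 3)%R <= size (P ^+ 3))%N.
  by rewrite -polyC_natr mul_polyC size_scale_leq.
set E := - 3 * D in H hid *.
have hUP : (size (U ^+ 2) <= size (P ^+ 3))%N.
  rewrite leqNgt; apply/negP => hlt.
  have s4' := leq_ltn_trans s4 hlt.
  have sR : size (4 * P ^+ 3 - U ^+ 2) = size (U ^+ 2).
    by rewrite addrC size_polyDl size_polyN.
  have lR : lead_coef (4 * P ^+ 3 - U ^+ 2) = - lead_coef U ^+ 2.
    by rewrite addrC lead_coefDl ?size_polyN // lead_coefN lead_coef_exp.
  have U0 : U != 0.
    by apply: contraTneq hlt => ->; rewrite expr0n /= size_poly0.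
  have L0 : (- 9 * a ^+ 2) * E != 0.
    by rewrite hid -size_poly_eq0 sR size_poly_eq0 expf_neq0.
  move: L0; rewrite mulf_eq0 negb_or => /andP [a20 E0].
  have a0 : a != 0 by apply: contraNneq a20 => ->; rewrite expr0n /= mulr0.
  have m9 : (- 9%:R : F) != 0 by rewrite oppr_eq0.
  have sL : size ((- 9 * a ^+ 2) * E) = (size (a ^+ 2) + size E).-1.
    by rewrite size_mul // e9 size_scale.
  have lL : lead_coef ((- 9 * a ^+ 2) * E) = (- 9%:R) * lead_coef a ^+ 2 * lead_coef E.
    by rewrite lead_coefM e9 lead_coefZ lead_coef_exp.
  have hs : (size (a ^+ 2) + size E).-1 = size (U ^+ 2) by rewrite -sL hid sR.
  have sa2 : size (a ^+ 2) = ((size a).-1 * 2).+1.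
    by rewrite -size_exp prednK // size_poly_gt0 expf_neq0.
  have su2 : size (U ^+ 2) = ((size U).-1 * 2).+1.
    by rewrite -size_exp prednK // size_poly_gt0 expf_neq0.
  rewrite sa2 su2 addSn /= in hs.
  have oE : odd (size E).
    by move/(congr1 odd): hs; rewrite oddD /= !oddM !andbF /=.
  have nimag : ~~ imaginary_disc E.
    rewrite /imaginary_disc negb_and; apply/orP; right.
    by case: (size E) oE => //= n.
  have sq : [exists x : F, x ^+ 2 == lead_coef E].
    apply/existsP; exists (lead_coef U / (3%:R * lead_coef a)).
    have hl : - 9%:R * lead_coef a ^+ 2 * lead_coef E = - lead_coef U ^+ 2.
      by rewrite -lL hid lR.
    have hu : lead_coef U ^+ 2 = 9%:R * lead_coef a ^+ 2 * lead_coef E.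
      by apply: oppr_inj; rewrite -hl !mulNr.
    have la0 : lead_coef a != 0 by rewrite lead_coef_eq0.
    rewrite expr_div_n exprMn -natrX hu.
    by rewrite [9%:R * _ * _]mulrC mulfK ?mulf_neq0 ?expf_neq0.
  by move: H; rewrite (negPf nimag) /unusual_disc sq !andbF.
have k0 : ((- 9%:R) * (- 3%:R) : F) != 0 by rewrite mulf_neq0 // oppr_eq0.
have hAD : (size (a ^+ 2 * D)%R <= size (P ^+ 3))%N.
  have eL : (- 9 * a ^+ 2) * E = ((- 9%:R) * (- 3%:R) : F) *: (a ^+ 2 * D).
    by rewrite /E e9 -polyC_natr -polyCN mul_polyC -scalerAl -scalerAr scalerA.
  rewrite -(size_scale _ k0) -eL hid.
  by rewrite (leq_trans (size_polyD _ _)) // geq_max size_polyN hUP andbT.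
by split; rewrite -!pabsX; apply: pabs_le.
Qed.
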